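(* Inside the quotient field $Q(\mathbb{Z}[q]^{\mathbb{N}})$ one has $$\mathbb{Z}[q]^{\mathbb{N}}[\Phi_{\mathbb{N}}^{-1}]=\mathbb{Z}[q]^{\mathbb{N}}+\mathbb{Z}[q,q^{-1}][\Phi_{\mathbb{N}}^{-1}].$$
   Context: $q$ is an indeterminate, $\Phi_n(q)$ the $n$th cyclotomic polynomial, and $\Phi_{\mathbb{N}}^*$ the multiplicative subset of $\mathbb{Z}[q]$ generated by all $\Phi_n(q)$, $n\in\mathbb{N}$. $\mathbb{Z}[q]^{\mathbb{N}}=\varprojlim_{f\in\Phi_{\mathbb{N}}^*}\mathbb{Z}[q]/(f)$; it is an integral domain in which $q$ is invertible, and the natural map $\mathbb{Z}[q,q^{-1}]\to\mathbb{Z}[q]^{\mathbb{N}}$ is injective, so $\mathbb{Q}(q)\subset Q(\mathbb{Z}[q]^{\mathbb{N}})$, where $Q(\cdot)$ denotes the quotient field. $\mathbb{Z}[q]^{\mathbb{N}}[\Phi_{\mathbb{N}}^{-1}]$ is the subring of $Q(\mathbb{Z}[q]^{\mathbb{N}})$ of fractions $f/g$ with $f\in\mathbb{Z}[q]^{\mathbb{N}}$, $g\in\Phi_{\mathbb{N}}^*$, and $\mathbb{Z}[q,q^{-1}][\Phi_{\mathbb{N}}^{-1}]$ is the subring of $\mathbb{Q}(q)$ of fractions $f/g$ with $f\in\mathbb{Z}[q,q^{-1}]$, $g\in\Phi_{\mathbb{N}}^*$. *)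

(* Defs.v *)
From HB Require Import structures.
From mathcomp Require Import all_boot all_order all_algebra all_field.
Set Implicit Arguments. Unset Strict Implicit. Unset Printing Implicit Defensive.
Import Order.TTheory GRing.Theory Num.Theory.
Local Open Scope ring_scope.

Definition PhiStar (f : {poly int}) : Prop :=
  exists s : seq nat, all (fun n => (0 < n)%N) s /\ f = \prod_(n <- s) 'Phi_n.

Definition pdvd (f g : {poly int}) : Prop := exists c : {poly int}, g = c * f.

Definition pcong (f a b : {poly int}) : Prop := pdvd f (a - b).

(** Elements of Z[q]^N = lim_{f in Phi_N^*} Z[q]/(f) are represented by
    families x with x f a representative of the f-component in Z[q]/(f),
    compatible under the transition maps Z[q]/(g) -> Z[q]/(f) for f | g.
    (The values of x outside Phi_N^* are irrelevant.) *)
Definition habiro (x : {poly int} -> {poly int}) : Prop :=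
  forall f g, PhiStar f -> PhiStar g -> pdvd f g -> pcong f (x g) (x f).

Definition heq (x y : {poly int} -> {poly int}) : Prop :=
  forall f, PhiStar f -> pcong f (x f) (y f).

Definition hadd (x y : {poly int} -> {poly int}) : {poly int} -> {poly int} :=
  fun f => x f + y f.
Definition hmul (x y : {poly int} -> {poly int}) : {poly int} -> {poly int} :=
  fun f => x f * y f.
Definition hpoly (p : {poly int}) : {poly int} -> {poly int} := fun _ => p.

(* Main.v *)
Require Import Defs.
From mathcomp Require Import ring.
From HB Require Import structures.
From mathcomp Require Import all_boot all_order all_algebra all_field.
From Stdlib Require Import ClassicalEpsilon.
Import GRing.Theory.
Local Open Scope ring_scope.
Set Implicit Arguments. Unset Strict Implicit.

Lemma pdvd_refl f : pdvd f f.
Proof. by exists 1; rewrite mul1r. Qed.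
Lemma pdvd0 f : pdvd f 0.
Proof. by exists 0; rewrite mul0r. Qed.
Lemma pdvdD f a b : pdvd f a -> pdvd f b -> pdvd f (a + b).
Proof. by move=> [c ->] [d ->]; exists (c + d); rewrite mulrDl. Qed.
Lemma pdvdN f a : pdvd f a -> pdvd f (- a).
Proof. by move=> [c ->]; exists (- c); rewrite mulNr. Qed.
Lemma pdvdMl f a b : pdvd f a -> pdvd f (b * a).
Proof. by move=> [c ->]; exists (b * c); rewrite mulrA. Qed.
Lemma pdvdMr f a b : pdvd f a -> pdvd f (a * b).
Proof. by move=> H; rewrite mulrC; apply: pdvdMl. Qed.
Lemma pdvd_trans f g a : pdvd f g -> pdvd g a -> pdvd f a.
Proof. by move=> [c ->] [d ->]; exists (d * c); rewrite mulrA. Qed.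
Lemma pdvd_eq f a b : a = b -> pdvd f a -> pdvd f b.
Proof. by move=> ->. Qed.

Lemma PhiStarM f g : PhiStar f -> PhiStar g -> PhiStar (f * g).
Proof.
move=> [s [Hs ->]] [t [Ht ->]]; exists (s ++ t); split.
  by rewrite all_cat Hs Ht.
by rewrite big_cat.
Qed.

Lemma PhiStar1 : PhiStar 1.
Proof. by exists [::]; rewrite big_nil. Qed.

Lemma Phi_coef0_unit n : (0 < n)%N -> 'Phi_n`_0 \is a GRing.unit.
Proof.
move=> n0; have := prod_Cyclotomic n0.
move/(congr1 (fun p : {poly int} => p.[0])).
rewrite horner_prod (big_rem n) ?divisors_id //= hornerD hornerN hornerXn expr0n.
rewrite eqn0Ngt n0 /= sub0r horner_coef0 => E.
have : ('Phi_n`_0 * \prod_(i <- rem n (divisors n)) ('Phi_i).[0]) \is a GRing.unit.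
  by rewrite E hornerC unitrN1.
by rewrite unitrM => /andP[].
Qed.

Lemma PhiStar_unit f : PhiStar f -> f`_0 \is a GRing.unit.
Proof.
move=> [s [Hs ->]]; elim: s Hs => [|n s IH] /=.
  by rewrite big_nil coefC eqxx unitr1.
move=> /andP[n0 Hs]; rewrite big_cons -horner_coef0 hornerM !horner_coef0.
by rewrite unitrM Phi_coef0_unit // IH.
Qed.

Lemma PhiStar_neq0 f : PhiStar f -> f != 0.
Proof.
move=> /PhiStar_unit H; apply/eqP => E; move: H; rewrite E coef0.
by rewrite unitr0.
Qed.

(* inverse of X mod f *)
Definition winv (f : {poly int}) : {poly int} := - ((f`_0)^-1)%:P * drop_poly 1 f.

Lemma winvE f : PhiStar f -> 'X * winv f = 1 - ((f`_0)^-1)%:P * f.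
Proof.
move=> Hf; have U := PhiStar_unit Hf.
have E := poly_take_drop 1 f.
rewrite /winv.
have T : take_poly 1 f = (f`_0)%:P.
  apply/polyP => i; rewrite coef_take_poly coefC.
  by case: i => [|i] //=.
set c := f`_0 in T U *.
have Hc : (c^-1)%:P * c%:P = 1 :> {poly int} by rewrite -polyCM mulVr.
rewrite -[in RHS]E T expr1 [in RHS]mulrDr Hc.
by rewrite opprD addrA subrr add0r mulNr mulrN mulrCA mulrA -mulrA (mulrC _ (drop_poly _ _)).
Qed.

Lemma winv_cong f : PhiStar f -> pcong f ('X * winv f) 1.
Proof.
move=> Hf; rewrite /pcong (winvE Hf).
apply: (pdvd_eq (a := - ((f`_0)^-1)%:P * f)); first by ring.
by apply: pdvdMl; apply: pdvd_refl.
Qed.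

Lemma pcongX f a b k : pcong f a b -> pcong f (a ^+ k) (b ^+ k).
Proof. by move=> H; rewrite /pcong subrXX; apply: pdvdMr. Qed.

Lemma winv_compat f f' : PhiStar f -> PhiStar f' -> pdvd f f' ->
  pcong f (winv f') (winv f).
Proof.
move=> Hf Hf' Hd; rewrite /pcong.
set w := winv f; set w' := winv f'.
have H1 : pdvd f ('X * w - 1) := winv_cong Hf.
have H2 : pdvd f ('X * w' - 1) := pdvd_trans Hd (winv_cong Hf').
apply: (pdvd_eq (a := (w' - w) * (- ('X * w - 1)) + ('X * w' - 1) * w - ('X * w - 1) * w)).
  by ring.
apply: pdvdD; last by apply: pdvdN; apply: pdvdMr.
by apply: pdvdD; [apply: pdvdMl; apply: pdvdN | apply: pdvdMr].
Qed.

Definition qdiv (g a : {poly int}) : {poly int} :=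
  match excluded_middle_informative (pdvd g a) with
  | left H => proj1_sig (constructive_indefinite_description _ H)
  | right _ => 0 end.

Lemma qdivP g a : pdvd g a -> a = qdiv g a * g.
Proof.
move=> H; rewrite /qdiv; case: excluded_middle_informative => // H'.
by case: constructive_indefinite_description.
Qed.

Theorem proposition7p4 :
  (forall (x : {poly int} -> {poly int}) (g : {poly int}),
     habiro x -> PhiStar g ->
     exists (y : {poly int} -> {poly int}) (p : {poly int}) (k : nat) (h : {poly int}),
       [/\ habiro y, PhiStar h &
         heq (hmul x (hpoly (h * 'X ^+ k)))
             (hmul (hpoly g) (hadd (hmul y (hpoly (h * 'X ^+ k))) (hpoly p)))])
  /\
  (forall (y : {poly int} -> {poly int}) (p : {poly int}) (k : nat) (h : {poly int}),
     habiro y -> PhiStar h ->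
     exists (x : {poly int} -> {poly int}) (g : {poly int}),
       [/\ habiro x, PhiStar g &
         heq (hmul x (hpoly (h * 'X ^+ k)))
             (hmul (hpoly g) (hadd (hmul y (hpoly (h * 'X ^+ k))) (hpoly p)))]).
Proof.
split.
- move=> x g Hx Hg.
  have Dy : forall f, PhiStar f -> pdvd g (x (f * g) - x g).
    move=> f Hf; apply: Hx => //; first exact: PhiStarM.
    by exists f.
  exists (fun f => qdiv g (x (f * g) - x g)), (x g), 0%N, g; split => //.
  + move=> f f' Hf Hf' [c Hc]; rewrite /pcong.
    have E := qdivP (Dy _ Hf); have E' := qdivP (Dy _ Hf').
    have Hd : pdvd (f * g) (f' * g) by exists c; rewrite Hc mulrA.
    have [e He] := Hx _ _ (PhiStarM Hf Hg) (PhiStarM Hf' Hg) Hd.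
    exists e; apply: (mulIf (PhiStar_neq0 Hg)).
    by rewrite mulrBl -E -E' -mulrA -He; ring.
  + move=> f Hf; rewrite /pcong /hmul /hadd /hpoly expr0 mulr1.
    have E := qdivP (Dy _ Hf).
    have H : pdvd f (x (f * g) - x f).
      by apply: Hx => //; [exact: PhiStarM | exists g; rewrite mulrC].
    apply: (pdvd_eq (a := - (g * (x (f * g) - x f)))); last by apply: pdvdN; apply: pdvdMl.
    rewrite -E; ring.
- move=> y p k h Hy Hh.
  exists (fun f => y f * h + p * winv f ^+ k), h; split => //.
  + move=> f f' Hf Hf' Hd; rewrite /pcong.
    apply: (pdvd_eq (a := (y f' - y f) * h + p * (winv f' ^+ k - winv f ^+ k))); first by ring.
    apply: pdvdD; first by apply: pdvdMr; exact: Hy.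
    apply: pdvdMl.
    exact: pcongX (winv_compat Hf Hf' Hd).
  + move=> f Hf; rewrite /pcong /hmul /hadd /hpoly.
    apply: (pdvd_eq (a := p * h * (('X * winv f) ^+ k - 1 ^+ k))); first by rewrite expr1n exprMn; ring.
    by apply: pdvdMl; apply: pcongX; apply: winv_cong.
Qed.
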